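(* Let $(X,b,m)$ be a weighted graph satisfying (C), (B), (M), and let $D\subseteq X$ be not $d_{\mathrm{comb}}$-relatively dense. Then there exists a sequence $(x_n)_{n\in\mathbb N}$ in $X$ such that for all $T>0$ and all $r\in[1,\infty]$, \[\lim_{n\to\infty}\|(S_{(\cdot)}\delta_{x_n})|_D\|_{L_r((0,T);\ell_2(D,m|_D))}=0,\] where $\delta_x=m(x)^{-1/2}\mathbf 1_{\{x\}}$.
   Context: Weighted graph $(X,b,m)$: $X$ countable, $m\colon X\to(0,\infty)$, $b$ symmetric non-negative with $b(x,x)=0$ and $\sum_yb(x,y)<\infty$. Paths are sequences $(x_0,\dots,x_k)$ with $b(x_j,x_{j+1})>0$. (C) connected; (B) $\sup_x\frac1{m(x)}\sum_yb(x,y)<\infty$; (M) $\sup_xm(x)<\infty$. Combinatorial metric $d_{\mathrm{comb}}(x,y)$: minimal number of steps of a path from $x$ to $y$ ($0$ if $x=y$). $D$ is $d_{\mathrm{comb}}$-relatively dense if $\inf\{R>0:\bigcup_{x\in D}\{y:d_{\mathrm{comb}}(x,y)\le R\}=X\}<\infty$. $H$ is the weighted Laplacian $Hf(x)=\frac1{m(x)}\sum_yb(x,y)(f(x)-f(y))$ on $\ell_2(X,m)$, $S_t=e^{-tH}$. *)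

(* Defs.v *)
From HB Require Import structures.
From mathcomp Require Import all_boot all_order all_algebra.
From mathcomp Require Import all_classical all_reals all_analysis.

Set Implicit Arguments.
Unset Strict Implicit.
Unset Printing Implicit Defensive.

Import Order.TTheory GRing.Theory Num.Theory.
Local Open Scope classical_set_scope.
Local Open Scope ring_scope.

Section WeightedGraphs.
Context {R : realType} {X : countType}.

Definition is_weighted_graph (b : X -> X -> R) (m : X -> R) : Prop :=
  [/\ (forall x, 0 < m x),
      (forall x y, 0 <= b x y),
      (forall x y, b x y = b y x),
      (forall x, b x x = 0) &
      (forall x, (\esum_(y in [set: X]) (b x y)%:E < +oo)%E)].

Definition gedge (b : X -> X -> R) : rel X := fun u v => 0 < b u v.

(* (x :: p) is a path of size p steps from x to y *)
Definition is_path_from_to (b : X -> X -> R) (x y : X) (p : seq X) : Prop :=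
  path (gedge b) x p /\ last x p = y.

Definition connected_graph (b : X -> X -> R) : Prop :=
  forall x y, exists p, is_path_from_to b x y p.

Definition cond_B (b : X -> X -> R) (m : X -> R) : Prop :=
  exists C : R, forall x,
    ((m x)^-1%:E * (\esum_(y in [set: X]) (b x y)%:E) <= C%:E)%E.

Definition cond_M (m : X -> R) : Prop := exists C : R, forall x, m x <= C.

(* combinatorial metric: minimal number of steps of a path from x to y
   (0 if x = y; set to 0 as well if no path exists, which does not happen
   under (C)) *)
Definition dcomb (b : X -> X -> R) (x y : X) : nat :=
  match pselect (exists n, `[< exists p, is_path_from_to b x y p /\ size p = n >]) with
  | left H => ex_minn H
  | right _ => 0%N
  end.

(* D is d_comb-relatively dense:
   inf {R > 0 : \bigcup_{x in D} B(x,R) = X} < oo, i.e. this set is non-empty *)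
Definition rel_dense (b : X -> X -> R) (D : set X) : Prop :=
  exists r : R, 0 < r /\
    \bigcup_(x in D) [set y | ((dcomb b x y)%:R <= r)] = [set: X].

Definition rsum (f : X -> R) : R :=
  fine (\esum_(y in [set: X]) (Num.max (f y) 0)%:E)%E
  - fine (\esum_(y in [set: X]) (Num.max (- f y) 0)%:E)%E.

Definition laplacian (b : X -> X -> R) (m : X -> R) (f : X -> R) : X -> R :=
  fun x => (m x)^-1 * rsum (fun y => b x y * (f x - f y)).

(* S_t f = e^{-tH} f = sum_k (-t)^k / k! H^k f  (H is bounded under (B)) *)
Definition heat_sg (b : X -> X -> R) (m : X -> R) (t : R) (f : X -> R) : X -> R :=
  fun x => limn (fun n => \sum_(k < n)
     ((- t) ^+ k / (k`!)%:R * iter k (laplacian b m) f x)).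

Definition delta (m : X -> R) (x : X) : X -> R :=
  fun y => if y == x then (Num.sqrt (m x))^-1 else 0.

Definition l2norm_on (m : X -> R) (D : set X) (f : X -> R) : \bar R :=
  ((\esum_(y in D) (m y * f y ^+ 2)%:E) `^ (2^-1)%R)%E.

End WeightedGraphs.

Definition Lr_norm_0T {R : realType} (T : R) (r : \bar R) (g : R -> \bar R) : \bar R :=
  Lnorm (mrestr (@lebesgue_measure R) (measurable_itv `]0%R, T[)) r g.

(* Main.v *)
Require Import Defs.
From HB Require Import structures.
From mathcomp Require Import all_boot all_order all_algebra.
From mathcomp Require Import all_classical all_reals all_analysis.
From mathcomp Require Import ring lra zify ess_sup_inf.

Set Implicit Arguments.
Unset Strict Implicit.
Unset Printing Implicit Defensive.
Import Order.TTheory GRing.Theory Num.Theory.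
Import numFieldNormedType.Exports.
Local Open Scope classical_set_scope.
Local Open Scope ring_scope.

Section Esum.
Context {R : realType} {T : choiceType}.

Lemma esumZ_le (S : set T) (a : T -> \bar R) (c : R) : 0 <= c ->
  (forall i, (0 <= a i)%E) ->
  (\esum_(i in S) (c%:E * a i) <= c%:E * \esum_(i in S) a i)%E.
Proof.
move=> c0 a0; apply: ge_ereal_sup => _ [F [finF FS] <-].
rewrite -ge0_mule_fsumr//; apply: lee_wpmul2l; first by rewrite lee_fin.
by apply: ereal_sup_ubound; exists F.
Qed.

Lemma esum_swap (a : T -> T -> \bar R) : (forall i j, (0 <= a i j)%E) ->
  \esum_(i in [set: T]) \esum_(j in [set: T]) a i j =
  \esum_(j in [set: T]) \esum_(i in [set: T]) a i j.
Proof.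
move=> a0; rewrite !esum_esum//.
rewrite (@reindex_esum _ _ _ ([set: T] `*`` (fun=> [set: T])) ([set: T] `*`` (fun=> [set: T])) (fun k => (k.2, k.1))) //.
split=> [k _ //|[? ?] [? ?] _ _ [-> ->] //|[i j] _].
by exists (j, i).
Qed.

End Esum.

Lemma abs_series {R : realType} (u : nat -> R) : (\sum_(k <oo) (`|u k|)%:E < +oo)%E ->
  ((`|limn (fun n => \sum_(k < n) u k)|)%:E <= \sum_(k <oo) (`|u k|)%:E)%E.
Proof.
move=> hfin.
have hc := @nnseries_is_cvg R (fun k => `|u k|) (fun i => normr_ge0 _) hfin.
have e1 : (fun n => \sum_(k < n) u k) = series u.
  by apply/funext => n; rewrite /series /= big_mkord.
have h := @lim_series_norm R R^o u hc.
have h' : ((`|limn (fun n => \sum_(k < n) u k)|)%:E <= (limn [normed series u])%:E)%E.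
  by rewrite lee_fin e1.
apply: le_trans h' _.
rewrite -EFin_lim //.
have -> : EFin \o [normed series u] = (fun n => \sum_(0 <= k < n) (`|u k|)%:E)%E.
  by apply/funext => n; rewrite /= sumEFin.
by [].
Qed.

Lemma esum_swap2 {R : realType} {T1 T2 : choiceType} (A : set T1) (B : set T2)
  (a : T1 -> T2 -> \bar R) : (forall i j, (0 <= a i j)%E) ->
  \esum_(i in A) \esum_(j in B) a i j = \esum_(j in B) \esum_(i in A) a i j.
Proof.
move=> a0; rewrite !esum_esum//.
rewrite (@reindex_esum _ _ _ (B `*`` (fun=> A)) (A `*`` (fun=> B)) (fun k => (k.2, k.1))) //.
split=> [[i j] [] //|[? ?] [? ?] _ _ [-> ->] //|[i j] [hi hj]].
by exists (j, i).
Qed.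

Lemma EE {R : realType} (x : R) : 0 <= x ->
  (\sum_(k <oo) ((x ^+ k / k`!%:R)%:E) = (expR x)%:E)%E.
Proof.
move=> x0; rewrite /expR -EFin_lim; last exact: is_cvg_series_exp_coeff.
by apply/congr_lim/funext => n; rewrite /= sumEFin.
Qed.

Section Rsum.
Context {R : realType} {X : countType}.

Lemma maxD_norm (a : R) : Num.max a 0 + Num.max (- a) 0 = `|a|.
Proof.
rewrite !maxEle; case: ifPn => h1; case: ifPn => h2.
- have -> : a = 0 by apply/eqP; rewrite eq_le h1 -oppr_le0.
  by rewrite normr0 addr0.
- by rewrite add0r ler0_norm.
- by rewrite addr0 ger0_norm// -oppr_le0.
- by move: h1 h2; rewrite -!ltNge oppr_gt0 => h1 h2; move: (lt_trans h1 h2); rewrite ltxx.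
Qed.

Lemma rsum_bound (g : X -> R) (B : R) :
  (\esum_(y in [set: X]) (`|g y|)%:E <= B%:E)%E -> `|rsum g| <= B.
Proof.
move=> hB; rewrite /rsum.
set P := (\esum_(y in _) _)%E; set N := (\esum_(y in _) _)%E.
have P0 : (0 <= P)%E by apply: esum_ge0 => y _; rewrite lee_fin le_max lexx orbT.
have N0 : (0 <= N)%E by apply: esum_ge0 => y _; rewrite lee_fin le_max lexx orbT.
have PN : (P + N = \esum_(y in [set: X]) (`|g y|)%:E)%E.
  rewrite /P /N -esumD; last 2 first.
  - by move=> y _; rewrite lee_fin le_max lexx orbT.
  - by move=> y _; rewrite lee_fin le_max lexx orbT.
  by apply: eq_esum => y _; rewrite -EFinD maxD_norm.
move: hB; rewrite -PN; move: P N P0 N0 {PN} => [p| |] [n| |] //=; rewrite !lee_fin => p0 n0 hB.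
by rewrite (le_trans _ hB)// (le_trans (ler_normB _ _))// !ger0_norm.
Qed.

Lemma rsum0 (g : X -> R) : (forall y, g y = 0) -> rsum g = 0.
Proof.
move=> g0; rewrite /rsum !esum1 ?subrr// => y _; rewrite g0 ?oppr0 maxxx//.
Qed.


Lemma rsum_boundE (g : X -> R) :
  (\esum_(y in [set: X]) (`|g y|)%:E < +oo)%E ->
  ((`|rsum g|)%:E <= \esum_(y in [set: X]) (`|g y|)%:E)%E.
Proof.
move=> hf; have h0 : (0 <= \esum_(y in [set: X]) (`|g y|)%:E)%E.
  by apply: esum_ge0.
rewrite -(@fineK _ (\esum_(y in [set: X]) (`|g y|)%:E)); last first.
  by rewrite ge0_fin_numE.
by rewrite lee_fin; apply: rsum_bound; rewrite fineK// ge0_fin_numE.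
Qed.

End Rsum.

Section Graph.
Context {R : realType} {X : countType} (b : X -> X -> R) (m : X -> R).
Hypothesis hw : is_weighted_graph b m.
Variable C : R.
Hypothesis C0 : 0 <= C.
Hypothesis hdeg : forall x,
  (\esum_(y in [set: X]) (b x y)%:E <= (C * m x)%:E)%E.

Definition N1 (f : X -> R) : \bar R := (\esum_(x in [set: X]) (m x * `|f x|)%:E)%E.

Lemma m_gt0 x : 0 < m x. Proof. by case: hw. Qed.
Lemma b_ge0 x y : 0 <= b x y. Proof. by case: hw. Qed.
Lemma b_sym x y : b x y = b y x. Proof. by case: hw. Qed.

Lemma esum_bf_le (f : X -> R) (M : R) x : 0 <= M -> (forall y, `|f y| <= M) ->
  (\esum_(y in [set: X]) (`|b x y * (f x - f y)|)%:E <= (2 * M * (C * m x))%:E)%E.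
Proof.
move=> M0 hM.
apply: (@le_trans _ _ (\esum_(y in [set: X]) ((2 * M)%:E * (b x y)%:E))%E).
  apply: le_esum => y _; rewrite -EFinM lee_fin normrM ger0_norm ?b_ge0//.
  rewrite mulrC ler_wpM2r ?b_ge0// (le_trans (ler_normB _ _))//.
  by rewrite mulr2n mulrDl mul1r lerD.
rewrite (le_trans (esumZ_le _ _ _))//.
- by rewrite mulr_ge0.
- by move=> y; rewrite lee_fin b_ge0.
- apply: (le_trans (lee_wpmul2l _ (hdeg x))); first by rewrite lee_fin mulr_ge0.
  by rewrite -EFinM.
Qed.

Lemma lap_bound (f : X -> R) (M : R) x : 0 <= M -> (forall y, `|f y| <= M) ->
  `|laplacian b m f x| <= 2 * C * M.
Proof.
move=> M0 hM; rewrite /laplacian normrM ger0_norm ?invr_ge0 ?(ltW (m_gt0 x))//.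
rewrite -(ler_pM2l (m_gt0 x)) mulrA mulfV ?gt_eqF ?m_gt0// mul1r.
rewrite (_ : m x * (2 * C * M) = 2 * M * (C * m x)); last by ring.
by apply: rsum_bound; apply: esum_bf_le.
Qed.

Lemma lap_supp (f : X -> R) x : laplacian b m f x != 0 ->
  f x != 0 \/ exists y, gedge b x y /\ f y != 0.
Proof.
apply: contraPP => /not_orP[/negP/negPn/eqP fx0 hy].
apply/negP/negPn/eqP; rewrite /laplacian rsum0 ?mulr0// => y.
rewrite fx0 sub0r; have [bxy|bxy] := ltP 0 (b x y).
  have : f y = 0 by apply: contra_notP hy => fy; exists y; split => //; exact/eqP.
  by move=> ->; rewrite oppr0 mulr0.
have -> : b x y = 0 by apply/eqP; rewrite eq_le bxy b_ge0.
by rewrite mul0r.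
Qed.


Lemma N1_ge0 f : (0 <= N1 f)%E.
Proof. by apply: esum_ge0 => x _; rewrite lee_fin mulr_ge0 ?(ltW (m_gt0 x)). Qed.

Lemma lap_l1 (f : X -> R) (M : R) : 0 <= M -> (forall y, `|f y| <= M) ->
  (N1 (laplacian b m f) <= (2 * C)%:E * N1 f)%E.
Proof.
move=> M0 hM.
have step x : ((m x * `|laplacian b m f x|)%:E <= \esum_(y in [set: X])
     ((`|f x| * b x y)%:E + (`|f y| * b x y)%:E))%E.
  rewrite /laplacian normrM ger0_norm ?invr_ge0 ?(ltW (m_gt0 x)) //.
  rewrite mulrA mulfV ?gt_eqF ?m_gt0// mul1r.
  apply: le_trans (rsum_boundE _) _.
    by apply: le_lt_trans (esum_bf_le _ M0 hM) _; exact: ltry.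
  apply: le_esum => y _; rewrite -EFinD lee_fin normrM ger0_norm ?b_ge0//.
  by rewrite mulrC -mulrDl ler_wpM2r ?b_ge0// ler_normB.
apply: le_trans (le_esum (fun x _ => step x)) _.
have -> : (\esum_(x in [set: X]) \esum_(y in [set: X])
     ((`|f x| * b x y)%:E + (`|f y| * b x y)%:E) =
   \esum_(x in [set: X]) (\esum_(y in [set: X]) (`|f x| * b x y)%:E +
     \esum_(y in [set: X]) (`|f y| * b x y)%:E))%E.
  by apply: eq_esum => x _; apply: esumD => y _; rewrite lee_fin mulr_ge0 ?b_ge0.
rewrite esumD; last 2 first.
- by move=> x _; apply: esum_ge0 => y _; rewrite lee_fin mulr_ge0 ?b_ge0.
- by move=> x _; apply: esum_ge0 => y _; rewrite lee_fin mulr_ge0 ?b_ge0.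
have key : (\esum_(x in [set: X]) \esum_(y in [set: X]) (`|f x| * b x y)%:E
    <= C%:E * N1 f)%E.
  apply: le_trans (esumZ_le _ C0 _); last first.
    by move=> x; rewrite lee_fin mulr_ge0 ?(ltW (m_gt0 x)).
  apply: le_esum => x _.
  under eq_esum do rewrite EFinM.
  apply: le_trans (esumZ_le _ _ _) _ => //.
    by move=> y; rewrite lee_fin b_ge0.
  apply: le_trans (lee_wpmul2l _ (hdeg x)) _ => //.
  by rewrite -!EFinM lee_fin mulrCA (mulrC `|f x|).
have key2 : (\esum_(x in [set: X]) \esum_(y in [set: X]) (`|f y| * b x y)%:E
    <= C%:E * N1 f)%E.
  rewrite esum_swap; last by move=> i j; rewrite lee_fin mulr_ge0 ?b_ge0.
  rewrite (_ : (fun j => _) = (fun j => \esum_(i in [set: X]) (`|f j| * b j i)%:E)%E)//.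
  by apply/funext => j; apply: eq_esum => i _; rewrite b_sym.
rewrite (le_trans (leeD key key2))//.
rewrite (_ : 2 * C = C + C); last by ring.
by rewrite EFinD ge0_muleDl// lee_fin.
Qed.


Lemma dcomb_le x y p : is_path_from_to b x y p -> (dcomb b x y <= size p)%N.
Proof.
move=> hp; rewrite /dcomb; case: pselect => // H.
case: ex_minnP => n _; apply; apply/asboolP; by exists p.
Qed.

Section Iter.
Variable y0 : X.
Let s := (Num.sqrt (m y0))^-1.
Definition hk (k : nat) := iter k (laplacian b m) (delta m y0).

Lemma s_ge0 : 0 <= s.
Proof. by rewrite invr_ge0 sqrtr_ge0. Qed.

Lemma hk_bound k z : `|hk k z| <= (2 * C) ^+ k * s.
Proof.
elim: k z => [|k IH] z.
  rewrite /hk /= /delta expr0 mul1r; case: ifP => _; first by rewrite ger0_norm// s_ge0.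
  by rewrite normr0 s_ge0.
rewrite /hk iterS exprS -mulrA.
apply: lap_bound => //; by rewrite mulr_ge0 ?s_ge0 ?exprn_ge0 ?mulr_ge0.
Qed.

Lemma N1_delta : (N1 (delta m y0) <= (Num.sqrt (m y0))%:E)%E.
Proof.
rewrite /N1 (_ : (fun x => _) = (fun x => if x \in [set y0] then (m x * `|delta m y0 x|)%:E else 0%E)); last first.
  apply/funext => x; have [->|hx] := eqVneq x y0; first by rewrite mem_set.
  rewrite memNset; last by move=> /= h; rewrite h eqxx in hx.
  by rewrite /delta (negPf hx) normr0 mulr0.
rewrite -esum_mkcond esum_set1 ?lee_fin ?mulr_ge0 ?(ltW (m_gt0 y0))//.
rewrite /delta eqxx ger0_norm ?invr_ge0 ?sqrtr_ge0//.
have hm := m_gt0 y0.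
rewrite -{1}(sqr_sqrtr (ltW hm)) expr2 -mulrA mulfV ?mulr1//.
by rewrite gt_eqF// sqrtr_gt0.
Qed.

Lemma hk_l1 k : (N1 (hk k) <= ((2 * C) ^+ k * Num.sqrt (m y0))%:E)%E.
Proof.
elim: k => [|k IH]; first by rewrite expr0 mul1r; exact: N1_delta.
rewrite /hk iterS.
apply: le_trans (lap_l1 (M := (2 * C) ^+ k * s) _ _) _.
- by rewrite mulr_ge0 ?s_ge0 ?exprn_ge0 ?mulr_ge0.
- exact: hk_bound.
apply: le_trans (lee_wpmul2l _ IH) _; first by rewrite lee_fin mulr_ge0.
by rewrite -EFinM exprS -mulrA.
Qed.

Lemma hk_supp k z : hk k z != 0 ->
  exists p, is_path_from_to b z y0 p /\ (size p <= k)%N.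
Proof.
elim: k z => [|k IH] z.
  rewrite /hk /= /delta; case: ifPn => [/eqP -> _|]; last by rewrite eqxx.
  by exists [::].
rewrite /hk iterS => /lap_supp [/IH [p [hp hs]]|[y [ezy /IH [p [[hp hl] hs]]]]].
  by exists p; split => //; rewrite (leq_trans hs).
exists (y :: p); split; last by rewrite /= ltnS.
by split => //=; rewrite ezy.
Qed.


Variable t : R.
Let K := 2 * C.
Definition term k z := (- t) ^+ k / (k`!)%:R * hk k z.
Definition heat z := limn (fun n => \sum_(k < n) term k z).

Lemma K_ge0 : 0 <= K. Proof. by rewrite mulr_ge0. Qed.

Lemma term_norm k z : `|term k z| = (`|t| ^+ k / k`!%:R) * `|hk k z|.
Proof.
by rewrite /term normrM normrM normrX normrN normfV (ger0_norm (ler0n _ _)).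
Qed.

Lemma series_bound z :
  (\sum_(k <oo) (`|term k z|)%:E <= (s * expR (K * `|t|))%:E)%E.
Proof.
apply: (@le_trans _ _ (\sum_(k <oo) (s%:E * (((K * `|t|) ^+ k / k`!%:R))%:E))%E).
  apply: lee_nneseries => [k _ _|k _]; first by rewrite lee_fin.
  rewrite -EFinM lee_fin term_norm exprMn.
  rewrite [X in _ <= X](_ : _ = (`|t| ^+ k / k`!%:R) * (K ^+ k * s)); last by ring.
  by rewrite ler_wpM2l ?hk_bound// divr_ge0 ?exprn_ge0.
rewrite nneseriesZl; last by move=> k _; rewrite lee_fin divr_ge0 ?exprn_ge0 ?mulr_ge0 ?K_ge0.
by rewrite EE ?mulr_ge0 ?K_ge0// -EFinM.
Qed.

Lemma heat_abs z : ((`|heat z|)%:E <= \sum_(k <oo) (`|term k z|)%:E)%E.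
Proof.
apply: abs_series; apply: le_lt_trans (series_bound z) _; exact: ltry.
Qed.

Lemma heat_sup z : `|heat z| <= s * expR (K * `|t|).
Proof. by rewrite -lee_fin (le_trans (heat_abs z)) ?series_bound. Qed.


Lemma term_esum_le (D : set X) (n k : nat) (T : R) :
  (forall z, D z -> (n < dcomb b z y0)%N) -> `|t| <= T ->
  (\esum_(z in D) (m z * `|term k z|)%:E <=
     ((if (n < k)%N then (K * T) ^+ k / k`!%:R else 0) * Num.sqrt (m y0))%:E)%E.
Proof.
move=> hD hT; case: ifPn => nk; last first.
  rewrite mul0r esum1// => z Dz; rewrite /term.
  suff -> : hk k z = 0 by rewrite mulr0 normr0 mulr0.
  apply/eqP; apply: contraT => /hk_supp [p [hp hs]].
  have := dcomb_le hp; have := hD z Dz; move: nk hs; rewrite -leqNgt; lia.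
apply: (@le_trans _ _ (\esum_(z in [set: X]) (m z * `|term k z|)%:E)%E).
  rewrite esum_mkcond; apply: le_esum => z _.
  case: ifPn => _ //; by rewrite lee_fin mulr_ge0 ?(ltW (m_gt0 z)).
set w := `|t| ^+ k / k`!%:R.
have w0 : 0 <= w by rewrite divr_ge0 ?exprn_ge0.
apply: (@le_trans _ _ (\esum_(z in [set: X]) (w%:E * (m z * `|hk k z|)%:E))%E).
  apply: le_esum => z _; rewrite -EFinM lee_fin term_norm.
  by rewrite mulrCA.
apply: le_trans (esumZ_le _ w0 _) _.
  by move=> z; rewrite lee_fin mulr_ge0 ?(ltW (m_gt0 z)).
apply: le_trans (lee_wpmul2l _ (hk_l1 k)) _; first by rewrite lee_fin.
rewrite -EFinM lee_fin mulrA ler_wpM2r ?sqrtr_ge0// /w.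
rewrite mulrC mulrA ler_wpM2r ?invr_ge0 ?ler0n// -exprMn.
rewrite lerXn2r ?nnegrE ?mulr_ge0 ?K_ge0//.
  exact: le_trans (normr_ge0 t) hT.
by rewrite /K ler_wpM2l// mulr_ge0.
Qed.


Lemma heat_l2 (D : set X) (n : nat) (T : R) :
  (forall z, D z -> (n < dcomb b z y0)%N) -> `|t| <= T ->
  (\esum_(z in D) (m z * heat z ^+ 2)%:E <=
    (expR (K * T))%:E * \sum_(n.+1 <= k <oo) (((K * T) ^+ k / k`!%:R)%:E))%E.
Proof.
move=> hD hT.
have T0 : 0 <= T := le_trans (normr_ge0 t) hT.
set B := s * expR (K * T).
have B0 : 0 <= B by rewrite mulr_ge0 ?s_ge0 ?expR_ge0.
apply: (@le_trans _ _ (\esum_(z in D) (B%:E * (m z * `|heat z|)%:E))%E).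
  apply: le_esum => z _; rewrite -EFinM lee_fin.
  rewrite -real_normK ?num_real// expr2 mulrA [B * _]mulrC ler_wpM2l //.
    by rewrite mulr_ge0 ?(ltW (m_gt0 z)).
  apply: le_trans (heat_sup z) _; rewrite ler_wpM2l ?s_ge0// ler_expR.
  by rewrite ler_wpM2l ?K_ge0.
apply: le_trans (esumZ_le _ B0 _) _.
  by move=> z; rewrite lee_fin mulr_ge0 ?(ltW (m_gt0 z)).
have E1 : (\esum_(z in D) (m z * `|heat z|)%:E <=
    (Num.sqrt (m y0))%:E * \sum_(n.+1 <= k <oo) (((K * T) ^+ k / k`!%:R)%:E))%E.
  apply: (@le_trans _ _ (\esum_(z in D) \sum_(k <oo) ((m z * `|term k z|)%:E))%E).
    apply: le_esum => z _; rewrite EFinM.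
    apply: le_trans (lee_wpmul2l _ (heat_abs z)) _.
      by rewrite lee_fin (ltW (m_gt0 z)).
    rewrite -nneseriesZl; last by move=> k _; rewrite lee_fin.
    by under eq_eseriesr do rewrite -EFinM.
  have -> : (\esum_(z in D) \sum_(k <oo) ((m z * `|term k z|)%:E) =
      \esum_(z in D) \esum_(k in [set: nat]) ((m z * `|term k z|)%:E))%E.
    apply: eq_esum => z _; apply: nneseries_esumT => k.
    by rewrite lee_fin mulr_ge0 ?(ltW (m_gt0 z)).
  rewrite esum_swap2; last by move=> z k; rewrite lee_fin mulr_ge0 ?(ltW (m_gt0 z)).
  apply: (@le_trans _ _ (\esum_(k in [set: nat])
     ((if (n < k)%N then (K * T) ^+ k / k`!%:R else 0) * Num.sqrt (m y0))%:E)%E).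
    by apply: le_esum => k _; exact: term_esum_le.
  rewrite -nneseries_esumT; last first.
    move=> k; rewrite lee_fin mulr_ge0 ?sqrtr_ge0//; case: ifPn => // _.
    by rewrite divr_ge0 ?exprn_ge0 ?mulr_ge0 ?K_ge0.
  under eq_eseriesr do rewrite mulrC EFinM.
  rewrite nneseriesZl; last first.
    move=> k _; rewrite lee_fin; case: ifPn => // _.
    by rewrite divr_ge0 ?exprn_ge0 ?mulr_ge0 ?K_ge0.
  apply: lee_wpmul2l; first by rewrite lee_fin sqrtr_ge0.
  rewrite (nneseries_split 0 n.+1); last first.
    move=> k _; rewrite lee_fin; case: ifPn => // _.
    by rewrite divr_ge0 ?exprn_ge0 ?mulr_ge0 ?K_ge0.
  rewrite add0n big_nat big1 ?add0e; last first.
    by move=> k /andP[_ hk]; rewrite ifF //; apply/negbTE; rewrite -leqNgt -ltnS.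
  apply: lee_nneseries => k.
    by move=> _ _; rewrite lee_fin; case: ifPn => // _; rewrite divr_ge0 ?exprn_ge0 ?mulr_ge0 ?K_ge0.
  by move=> _; rewrite lee_fin; case: ifPn => // _; rewrite divr_ge0 ?exprn_ge0 ?mulr_ge0 ?K_ge0.
apply: le_trans (lee_wpmul2l _ E1) _; first by rewrite lee_fin.
rewrite muleA -EFinM /B /s mulrAC mulVf ?mul1r//.
by rewrite gt_eqF// sqrtr_gt0 m_gt0.
Qed.

End Iter.

End Graph.

Lemma poweR_le {R : realType} (x y : \bar R) (r : R) : (0 <= x)%E -> (x <= y)%E -> 0 <= r ->
  (x `^ r <= y `^ r)%E.
Proof.
move=> x0 xy r0; move: y xy => [y| |] xy.
- move: x x0 xy => [x| |] //= x0 xy.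
  rewrite lee_fin ge0_ler_powR// ?nnegrE//.
  by rewrite -lee_fin (le_trans x0).
- have [->|rn0] := eqVneq r 0; first by rewrite !poweRe0.
  by rewrite poweRyr// leey.
- by move: (le_trans x0 xy).
Qed.

Lemma le_integral_nm d (T : measurableType d) {R : realType}
  (mu : {measure set T -> \bar R}) (f g : T -> \bar R) :
  (forall x, (0 <= f x)%E) -> (forall x, (f x <= g x)%E) ->
  (\int[mu]_x f x <= \int[mu]_x g x)%E.
Proof.
move=> f0 fg; have g0 x : (0 <= g x)%E by apply: le_trans (fg x).
rewrite !ge0_integralTE//; apply: le_ereal_sup => _ [h hf <-].
by exists h => // x; apply: le_trans (hf x) (fg x).
Qed.

Section Lnorm0T.
Context {R : realType} (T : R).
Hypothesis T0 : 0 < T.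
Let D := `]0%R, T[%classic : set R.
Let mD : measurable D := measurable_itv _.
Let mu := mrestr (@lebesgue_measure R) mD.

Lemma mu_setT : mu [set: R] = T%:E.
Proof.
rewrite /mu /mrestr setTI /D lebesgue_measure_itv/= lte_fin T0.
by rewrite oppr0 adde0.
Qed.

Lemma ae_D (P : R -> Prop) : (forall t, D t -> P t) -> \forall x \ae mu, P x.
Proof.
move=> hP; exists (~` D); split.
- exact: measurableC.
- by rewrite /mu /mrestr setICl measure0.
- by move=> t /= nPt Dt; apply: nPt; apply: hP.
Qed.

Lemma integral_F (a : R) :
  (\int[mu]_x (if x \in D then a%:E else +oo) = a%:E * T%:E)%E.
Proof.
rewrite (@ae_eq_integral _ _ _ mu setT (cst a%:E)) //.
- by rewrite integral_cst//; congr (_ * _)%E; exact: mu_setT.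
- move=> _ B mB; rewrite setTI.
  have -> : (fun x => if x \in D then a%:E else +oo%E) @^-1` B =
      (D `&` [set _ | B a%:E]) `|` (~` D `&` [set _ | B +oo%E]).
    apply/seteqP; split => x /=.
      case: ifPn => hx Bx; first by left; split => //; exact/set_mem.
      by right; split => // Dx; move: hx; rewrite mem_set.
    by move=> [[/mem_set -> //]|[hx hB]]; rewrite memNset.
  apply: measurableU; apply: measurableI.
  + exact: mD.
  + have [h|h] := pselect (B a%:E).
      by rewrite (_ : [set _ | _] = setT) //; apply/seteqP; split.
    by rewrite (_ : [set _ | _] = set0) //; apply/seteqP; split.
  + exact: measurableC.
  + have [h|h] := pselect (B +oo%E).
      by rewrite (_ : [set _ | _] = setT) //; apply/seteqP; split.
    by rewrite (_ : [set _ | _] = set0) //; apply/seteqP; split.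
- apply: ae_D => t Dt _; by rewrite mem_set.
Qed.

Lemma Lnorm_bound (r : \bar R) : (1 <= r)%E -> exists L : R, 0 <= L /\
  forall (f : R -> \bar R) (c : R), 0 <= c -> (forall t, (0 <= f t)%E) ->
    (forall t, D t -> (f t <= c%:E)%E) -> (Lr_norm_0T T r f <= (c * L)%:E)%E.
Proof.
move: r => [p| |] //; rewrite ?lee_fin => p1.
- exists (T `^ p^-1); split; first exact: powR_ge0.
  move=> f c c0 f0 fc; rewrite /Lr_norm_0T unlock.
  have p0 : 0 < p by apply: lt_le_trans p1.
  apply: (@le_trans _ _ (((c `^ p) * T)%:E `^ p^-1)%E).
    apply: poweR_le; first by apply: integral_ge0 => x _; exact: poweR_ge0.
      rewrite EFinM -integral_F; apply: le_integral_nm => [x|x].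
        exact: poweR_ge0.
      case: ifPn => [/[!inE] hx|_]; last exact: leey.
      rewrite gee0_abs// -poweR_EFin; apply: poweR_le => //; first exact: fc.
      exact: ltW.
    by rewrite invr_ge0 ltW.
  rewrite poweR_EFin lee_fin powRM ?powR_ge0 ?(ltW T0)// -powRrM mulfV ?gt_eqF//.
  by rewrite powRr1.
- exists 1; split => // f c c0 f0 fc.
  rewrite /Lr_norm_0T unlock /=.
  have -> : (0%R < mrestr lebesgue_measure (measurable_itv `]0%R, T[)
       [set: g_sigma_algebraType (R.-ocitv).-measurable])%E.
    by have := mu_setT; rewrite /mu => ->; rewrite lte_fin.
  rewrite mulr1.
  apply/ess_supP; apply: ae_D => t Dt /=; rewrite gee0_abs//; exact: fc.
Qed.

End Lnorm0T.

Unset Implicit Arguments.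
Theorem mainTheorem10 (R : realType) (X : countType)
    (b : X -> X -> R) (m : X -> R) (D : set X) :
  is_weighted_graph b m ->
  connected_graph b -> cond_B b m -> cond_M m ->
  ~ rel_dense b D ->
  exists xs : nat -> X,
    forall (T : R) (r : \bar R), 0 < T -> (1%:E <= r)%E ->
      (fun n => Lr_norm_0T T r
                  (fun t => l2norm_on m D (heat_sg b m t (delta m (xs n)))))
        @ \oo --> 0%E.
Proof.
move=> hw _ [C1 hC1] _ hnd.
pose C := Num.max C1 0.
have C0 : 0 <= C by rewrite le_max lexx orbT.
have hdeg : forall x, (\esum_(y in [set: X]) (b x y)%:E <= (C * m x)%:E)%E.
  move=> x; have hm := m_gt0 hw x; have := hC1 x.
  have fin : (\esum_(y in [set: X]) (b x y)%:E < +oo)%E by case: hw.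
  have ge0 : (0 <= \esum_(y in [set: X]) (b x y)%:E)%E.
    by apply: esum_ge0 => y _; rewrite lee_fin (b_ge0 hw).
  move: (\esum_(y in [set: X]) (b x y)%:E)%E fin ge0 => [d| |] // _ _.
  rewrite -EFinM !lee_fin => h.
  have := ler_wpM2l (ltW hm) h; rewrite mulrA mulfV ?gt_eqF // mul1r => h2.
  by apply: le_trans h2 _; rewrite mulrC ler_wpM2r ?(ltW hm)// le_max lexx.
have ex : forall n : nat, exists y, forall z, D z -> (n < dcomb b z y)%N.
  move=> n; apply: contrapT => hn; apply: hnd; exists n.+1%:R; split => //.
  apply/seteqP; split => // y _.
  apply: contrapT => hy; apply: hn; exists y => z Dz; rewrite ltnNge; apply/negP => hle.
  apply: hy; exists z => //=; rewrite ler_nat; exact: leq_trans hle (leqnSn n).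
have [xs hxs] := choice ex.
exists xs => T r T0 r1.
have [L [L0 hL]] := Lnorm_bound T0 r1.
pose K := 2 * C.
have K0 : 0 <= K by rewrite mulr_ge0.
have KT0 : 0 <= K * T by rewrite mulr_ge0 // ltW.
pose tail j := (\sum_(j.+1 <= k <oo) (((K * T) ^+ k / k`!%:R)%:E))%E.
have tail0 n : (0 <= tail n)%E.
  by apply: nneseries_ge0 => k _ _; rewrite lee_fin divr_ge0 ?exprn_ge0.
have tailfin n : tail n \is a fin_num.
  rewrite ge0_fin_numE//; apply: (@le_lt_trans _ _ (expR (K * T))%:E); last exact: ltry.
  rewrite -EE// (nneseries_split 0 n.+1); last by move=> k _; rewrite lee_fin divr_ge0 ?exprn_ge0.
  rewrite add0n; apply: leeDr; apply: sume_ge0 => k _.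
  by rewrite lee_fin divr_ge0 ?exprn_ge0.
pose eps j := expR (K * T) * fine (tail j).
have eps0 i : 0 <= eps i by rewrite mulr_ge0 ?expR_ge0 ?fine_ge0.
pose c j := Num.sqrt (eps j).
have hbound n t : 0 < t < T ->
    (l2norm_on m D (heat_sg b m t (delta m (xs n))) <= (c n)%:E)%E.
  move=> /andP[t0 tT].
  have h := @heat_l2 R X b m hw C C0 hdeg (xs n) t D n T (hxs n).
  rewrite /l2norm_on /c -powR12_sqrt// -poweR_EFin.
  apply: poweR_le.
  - by apply: esum_ge0 => z _; rewrite lee_fin mulr_ge0 ?sqr_ge0 ?(ltW (m_gt0 hw z)).
  - apply: le_trans (h _) _; first by rewrite ger0_norm ?(ltW t0) // ltW.
    by rewrite /eps EFinM fineK.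
  - by rewrite invr_ge0.
apply: (@squeeze_cvge _ _ _ _ (cst 0%E) _ (fun n => (c n * L)%:E)).
- apply: nearW => n; rewrite Lnorm_ge0 /=.
  apply: hL.
  + exact: sqrtr_ge0.
  + by move=> t; rewrite /l2norm_on poweR_ge0.
  + by move=> t /= /[!in_itv] /= /andP[ta tb]; apply: hbound; rewrite ta tb.
- exact: cvg_cst.
- have htail : tail n @[n --> \oo] --> 0%E.
    have h0 := @nneseries_tail_cvg R (fun k => ((K * T) ^+ k / k`!%:R)%:E) xpredT.
    have h1 : (\sum_(0 <= k <oo | xpredT k) ((K * T) ^+ k / k`!%:R)%:E < +oo)%E.
      by rewrite EE// ltry.
    have h2 : forall k, xpredT k -> (0 <= ((K * T) ^+ k / k`!%:R)%:E)%E.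
      by move=> k _; rewrite lee_fin divr_ge0 ?exprn_ge0.
    move: (h0 h1 h2); rewrite -cvg_shiftS; exact.
  have /fine_cvgP [_ hf] := htail.
  have heps : eps n @[n --> \oo] --> 0.
    rewrite -(mulr0 (expR (K * T))); exact: cvgMr hf.
  have hc : c n @[n --> \oo] --> 0.
    rewrite -sqrtr0; exact: (continuous_cvg _ (@sqrt_continuous R 0)) heps.
  apply/fine_cvgP; split; first exact: nearW.
  rewrite -(mul0r L); exact: cvgMl hc.
Qed.
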